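(* Let $\mathcal P_m$ be the $1$-dimensional PVAS with states $\{\perp,0,1,\dots,m\}$, stack alphabet $\{\gamma_0,\dots,\gamma_m\}$ and transitions $(\perp,0,\mathrm{pop}(\gamma_0),0)$, $(0,+1,\mathrm{nop},\perp)$, and for each $i\in\{1,\dots,m\}$: $(\perp,0,\mathrm{pop}(\gamma_i),i)$, $(i,+1,\mathrm{push}(\gamma_{i-1}),\perp)$, $(i,-1,\mathrm{push}(\gamma_{i-1}),i)$. Define for $c\in\mathbb N$ and $w=\gamma_{i_1}\cdots\gamma_{i_k}$ the number $\theta(c,w)=A_{i_1}\circ\cdots\circ A_{i_k}(c)$ (so $\theta(c,\varepsilon)=c$). Then for all $c,c'\in\mathbb N$ and $w,w'\in\{\gamma_0,\dots,\gamma_m\}^*$, if $(\perp,c,w)\xrightarrow{*}(\perp,c',w')$ then $\theta(c,w)\ge\theta(c',w')\ge c'+|w'|$. Consequently, from any configuration of $\mathcal P_m$ only finitely many configurations are reachable.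
   Context: Ackermann functions $A_j:\mathbb N\to\mathbb N$: $A_0(n)=n+1$, $A_j(n)=A_{j-1}^{n+1}(1)$ for $j>0$. For a $1$-dimensional PVAS with transitions in $Q\times\mathbb Z\times\mathrm{Op}(\Gamma)\times Q$, configurations are $(q,c,w)\in Q\times\mathbb N\times\Gamma^*$, and $(p,c,u)\to(q,d,v)$ iff some transition $(p,a,\mathrm{op},q)$ has $d=c+a\ge0$ and either $\mathrm{op}=\mathrm{push}(\gamma)$, $v=u\gamma$; or $\mathrm{op}=\mathrm{pop}(\gamma)$, $u=v\gamma$; or $\mathrm{op}=\mathrm{nop}$, $u=v$. $\xrightarrow{*}$ is the reflexive transitive closure; $|w'|$ is the length of $w'$. *)

(* Defs.v *)
From HB Require Import structures.
From mathcomp Require Import all_boot all_order all_algebra.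
From Stdlib Require Import Relations.
Set Implicit Arguments. Unset Strict Implicit. Unset Printing Implicit Defensive.
Import Order.TTheory GRing.Theory Num.Theory.

Fixpoint ack (j : nat) : nat -> nat :=
  match j with
  | 0 => S
  | j'.+1 => fun n => iter n.+1 (ack j') 1
  end.

Inductive Op (G : Type) : Type :=
  | Push of G
  | Pop of G
  | Nop.
Arguments Nop {G}.

(* Configurations are (state, counter, stack); the top of the stack is the
   END of the word (push(g) turns u into u g). *)
Definition config (Q G : Type) := (Q * nat * seq G)%type.

Definition pvas_step (Q G : Type) (T : Q -> int -> Op G -> Q -> Prop)
  (x y : config Q G) : Prop :=
  let: (p, c, u) := x in
  let: (q, d, v) := y in
  exists (a : int) (op : Op G),
    T p a op q /\ (d%:Z = c%:Z + a)%R /\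
    match op with
    | Push g => v = rcons u g
    | Pop g => u = rcons v g
    | Nop => u = v
    end.

Definition pvas_reach (Q G : Type) (T : Q -> int -> Op G -> Q -> Prop) :=
  clos_refl_trans (config Q G) (pvas_step T).

(* The PVAS P_m: states option 'I_(m.+1) (None = bottom, Some i = i),
   stack alphabet 'I_(m.+1) (i stands for gamma_i). *)
Inductive Pm_trans (m : nat) :
    option 'I_m.+1 -> int -> Op 'I_m.+1 -> option 'I_m.+1 -> Prop :=
  | Pm_t0 : Pm_trans None 0%R (Pop ord0) (Some ord0)
  | Pm_t1 : Pm_trans (Some ord0) 1%R Nop None
  | Pm_pop (i : 'I_m.+1) : 0 < i -> Pm_trans None 0%R (Pop i) (Some i)
  | Pm_inc (i j : 'I_m.+1) : 0 < i -> val j = i.-1 ->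
      Pm_trans (Some i) 1%R (Push j) None
  | Pm_dec (i j : 'I_m.+1) : 0 < i -> val j = i.-1 ->
      Pm_trans (Some i) (-1)%R (Push j) (Some i).

Definition theta (m : nat) (c : nat) (w : seq 'I_m.+1) : nat :=
  foldr (fun (i : 'I_m.+1) acc => ack i acc) c w.

(* Main.v *)
Require Import Defs.
From mathcomp Require Import all_boot all_order all_algebra.
From mathcomp Require Import zify.
From Stdlib Require Import Relations.

Lemma iter_ge (f : nat -> nat) (x k : nat) :
  (forall n, n < f n) -> x + k <= iter k f x.
Proof.
move=> Hf; elim: k => [|k IH] /=; first by rewrite addn0.
by rewrite addnS; apply: leq_ltn_trans IH (Hf _).
Qed.

Lemma ack_gt j n : n < ack j n.
Proof.
elim: j n => [|j IH] n //=.
rewrite -iterS; have := @iter_ge (ack j) 1 n.+1 IH. lia.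
Qed.

Lemma ack_mono j n n' : n <= n' -> ack j n <= ack j n'.
Proof.
case: j => [|j] /=; first by [].
move=> Hle; rewrite -!iterS -(subnK Hle) -addnS iterD.
elim: (n' - n) => [|k IH] //=.
apply: leq_trans IH (ltnW (ack_gt _ _)).
Qed.

Lemma ackS_le j c : ack j c.+1 <= ack j.+1 c.
Proof.
rewrite /=; apply: ack_mono.
have := @iter_ge (ack j) 1 c (@ack_gt j); lia.
Qed.

Lemma theta_mono m (w : seq 'I_m.+1) c c' : c <= c' -> theta c w <= theta c' w.
Proof.
elim: w => [|i w IH] //= H; exact: ack_mono (IH H).
Qed.

Lemma theta_size m (w : seq 'I_m.+1) c : c + size w <= theta c w.
Proof.
elim: w => [|i w IH] /=; first by rewrite addn0.
by rewrite addnS; apply: leq_ltn_trans IH (ack_gt _ _).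
Qed.

Lemma theta_rcons m (w : seq 'I_m.+1) c i : theta c (rcons w i) = theta (ack i c) w.
Proof. by rewrite /theta foldr_rcons. Qed.

Definition Phi m (x : config (option 'I_m.+1) 'I_m.+1) : nat :=
  let: (q, c, w) := x in
  match q with None => theta c w | Some i => theta c (rcons w i) end.
Arguments Phi {m}.

Lemma Phi_size m q c (w : seq 'I_m.+1) : c + size w <= Phi (q, c, w).
Proof.
case: q => [i|] /=; last exact: theta_size.
have := @theta_size m (rcons w i) c; rewrite size_rcons; lia.
Qed.

Lemma step_Phi m x y : pvas_step (@Pm_trans m) x y -> Phi y <= Phi x.
Proof.
move: x y => [[p c] u] [[q d] v] /= [a [op [T [Hd Hop]]]].
case: T Hd Hop => /=.
- move=> Hd ->; have -> : d = c by lia. by [].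
- move=> Hd ->; have -> : d = c.+1 by lia. by rewrite theta_rcons.
- move=> i _ Hd ->; have -> : d = c by lia. by [].
- move=> i j Hi Hj Hd ->; have -> : d = c.+1 by lia.
  rewrite !theta_rcons; apply: theta_mono.
  have -> : (i : nat) = (j : nat).+1 by lia.
  exact: ackS_le.
- move=> i j Hi Hj Hd ->.
  have Ec : c = d.+1 by lia.
  have Ei : (i : nat) = (j : nat).+1 by lia.
  rewrite !theta_rcons Ec Ei /=. by [].
Qed.

Lemma reach_Phi m x y : pvas_reach (@Pm_trans m) x y -> Phi y <= Phi x.
Proof.
elim=> [{}x {}y H|{}x|{}x {}y z _ H1 _ H2]; first exact: step_Phi.
- by [].
- exact: leq_trans H2 H1.
Qed.

Theorem mainTheorem5 (m : nat) :
  (forall (c c' : nat) (w w' : seq 'I_m.+1),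
     pvas_reach (@Pm_trans m) (None, c, w) (None, c', w') ->
     theta c' w' <= theta c w /\ c' + size w' <= theta c' w') /\
  (forall x : config (option 'I_m.+1) 'I_m.+1,
     exists s : seq (config (option 'I_m.+1) 'I_m.+1),
       forall y, pvas_reach (@Pm_trans m) x y -> y \in s).
Proof.
split.
  move=> c c' w w' H; split; first exact: (@reach_Phi m _ _ H).
  exact: theta_size.
move=> x; set N := Phi x.
pose W := flatten [seq [seq val t | t <- enum {: n.-tuple 'I_m.+1}] | n <- iota 0 N.+1].
exists [seq ((qc.1, qc.2), w) |
        qc <- [seq (q, c) | q <- enum {: option 'I_m.+1}, c <- iota 0 N.+1], w <- W].
move=> [[q c] w] /reach_Phi H.
have Hs := leq_trans (@Phi_size m q c w) H.
apply: (allpairs_f (fun qc w => ((qc.1, qc.2), w)) (x:=(q, c))).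
  apply: allpairs_f; first by rewrite mem_enum.
  rewrite mem_iota; lia.
apply/flatten_mapP; exists (size w); first by rewrite mem_iota; lia.
have -> : w = val (in_tuple w) by [].
by apply: map_f; rewrite mem_enum.
Qed.
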